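(* For every integer $b\ge2$, digit $d\in\{0,\dots,b-1\}$ and $k\ge0$, $$H^{(k)}=\int_{[b^{-1},1)}\frac{d\mu_k(x)}{x}.$$
   Context: For an integer $n\ge0$, $k(n)$ denotes the number of occurrences of the digit $d$ in the base-$b$ representation of $n$ without leading zeros, and $H^{(k)}=\sum_{n\ge1,\ k(n)=k}1/n$. A string is a finite sequence $X=(d_l,\dots,d_1)$ of digits in $\{0,\dots,b-1\}$ (leading zeros allowed), of length $|X|=l\ge0$ (the empty string has length $0$); its value is $n(X)=\sum_{i=1}^{l}d_ib^{i-1}$ ($n(\emptyset)=0$). For $k\ge0$, $\mu_k$ is the discrete measure on $[0,1)$ defined by $\mu_k=\sum_{X}b^{-|X|}\delta_{n(X)/b^{|X|}}$, the sum running over all strings $X$ containing the digit $d$ exactly $k$ times (masses at the same point add). It has total mass $b$. *)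

(* Defs.v *)
From HB Require Import structures.
From mathcomp Require Import all_boot all_order all_algebra.
From mathcomp Require Import all_classical all_reals all_analysis.
Set Implicit Arguments. Unset Strict Implicit. Unset Printing Implicit Defensive.
Import Order.TTheory GRing.Theory Num.Theory.
Local Open Scope ring_scope.

(* k(n): number of occurrences of digit d in the base-b representation of n
   (no leading zeros).  For n >= 1 the digit positions are exactly the i with
   b^i <= n, and any such i satisfies i < n (as b >= 2). For n = 0 the
   representation is empty, so the count is 0. *)
Definition digcount (b d n : nat) : nat :=
  count (fun i => (b ^ i <= n)%N && ((n %/ b ^ i) %% b == d)%N) (iota 0 n).

Definition Hk (R : realType) (b d k : nat) : \bar R :=
  (\sum_(1 <= n <oo | digcount b d n == k) (n%:R^-1)%:E)%E.

(* A string X = (d_l, ..., d_1) is a seq 'I_b listed from the most significant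
   digit d_l to d_1; its length is size X. *)
Definition strval (b : nat) (X : seq 'I_b) : nat :=
  foldl (fun acc (c : 'I_b) => (acc * b + c)%N) 0%N X.

Definition strpt (R : realType) (b : nat) (X : seq 'I_b) : R :=
  (strval X)%:R / (b%:R ^+ size X).

Definition wt (R : realType) (b : nat) (d : 'I_b) (k : nat) (n : nat) : R :=
  match (pickle_inv n : option (seq 'I_b)) with
  | Some X => if count (pred1 d) X == k then (b%:R ^- size X) else 0
  | None => 0
  end.

Lemma wt_ge0 (R : realType) (b : nat) (d : 'I_b) (k n : nat) : 0 <= wt R d k n.
Proof.
rewrite /wt; case: (pickle_inv n) => [X|] //.
by case: ifP => // _; rewrite invr_ge0 exprn_ge0 // ler0n.
Qed.

Definition wtnng (R : realType) (b : nat) (d : 'I_b) (k n : nat) : {nonneg R} :=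
  NngNum (wt_ge0 R d k n).

Definition ptn (R : realType) (b : nat) (n : nat) : R :=
  match (pickle_inv n : option (seq 'I_b)) with
  | Some X => strpt R X
  | None => 0
  end.

(* mu_k = sum over all strings X with exactly k occurrences of d of
   b^{-|X|} * delta_{n(X)/b^|X|}  (strings with other counts get weight 0) *)
Definition muk (R : realType) (b : nat) (d : 'I_b) (k : nat)
  : {measure set R -> \bar R} :=
  mseries (fun n => mscale (wtnng R d k n) (@dirac _ R (ptn R b n) R)) 0.

(* Main.v *)
Require Import Defs.
From HB Require Import structures.
From mathcomp Require Import all_boot all_order all_algebra.
From mathcomp Require Import all_classical all_reals all_analysis.
From mathcomp Require Import measurable_realfun zify.
Import Order.TTheory GRing.Theory Num.Theory.

Section Comb.
Variables (b : nat) (hb : (2 <= b)%N) (d : 'I_b).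

Lemma strval_rcons (X : seq 'I_b) (c : 'I_b) :
  strval (rcons X c) = (strval X * b + c)%N.
Proof. by rewrite /strval -cats1 foldl_cat. Qed.

Lemma strval_nil : strval ([::] : seq 'I_b) = 0%N. Proof. by []. Qed.

Lemma strval_lt (X : seq 'I_b) : (strval X < b ^ size X)%N.
Proof.
elim/last_ind: X => [|Y c IH]; first by rewrite strval_nil expn0.
rewrite strval_rcons size_rcons expnS.
have := ltn_ord c; move: IH; set v := strval Y; set p := b ^ size Y.
move=> h1 h2; nia.
Qed.

Lemma count_iota_trunc (P : pred nat) B N :
  (forall i, (B <= i)%N -> ~~ P i) -> (B <= N)%N ->
  count P (iota 0 N) = count P (iota 0 B).
Proof.
move=> hP hBN; rewrite -(subnKC hBN) iotaD count_cat add0n.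
rewrite (_ : count P (iota B (N - B)) = 0%N) ?addn0 //.
apply/eqP; rewrite -leqn0 leqNgt -has_count; apply/hasPn => i.
by rewrite mem_iota => /andP[h _]; apply: hP.
Qed.

Definition dpred (n : nat) := fun i => (b ^ i <= n)%N && ((n %/ b ^ i) %% b == d)%N.

Lemma digcountE n L : (n < b ^ L)%N -> digcount b d n = count (dpred n) (iota 0 L).
Proof.
move=> hn; rewrite /digcount.
have hP : forall i, (minn n L <= i)%N -> ~~ dpred n i.
  move=> i; rewrite geq_min => hi; rewrite /dpred negb_and; apply/orP; left; rewrite -ltnNge.
  case/orP: hi => hi.
    by apply: (leq_trans _ (ltn_expl i hb)); rewrite ltnS.
  by apply: (leq_trans hn); rewrite leq_exp2l // ltnW.
change (count (dpred n) (iota 0 n) = count (dpred n) (iota 0 L)).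
rewrite (@count_iota_trunc (dpred n) (minn n L) n hP (geq_minl n L)).
by rewrite (@count_iota_trunc (dpred n) (minn n L) L hP (geq_minr n L)).
Qed.

Lemma digcount_step v c : (c < b)%N -> (0 < v * b + c)%N ->
  digcount b d (v * b + c) = ((c == d) + digcount b d v)%N.
Proof.
move=> hc hn.
have hb0 : (0 < b)%N by apply: leq_trans hb.
have hv : (v < b ^ v)%N by apply: ltn_expl.
have hn2 : (v * b + c < b ^ v.+1)%N.
  rewrite expnS; move: hv; set p := b ^ v => hv; nia.
rewrite (@digcountE _ _ hn2) (@digcountE _ _ hv) /=.
congr addn.
  rewrite /dpred expn0 divn1 hn /= modnMDl modn_small //.
have -> : iota 1 v = [seq 1 + i | i <- iota 0 v] by rewrite -iotaDl.
rewrite count_map; apply: eq_count => i /=.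
rewrite /dpred expnS.
have -> : (v * b + c) %/ (b * b ^ i) = v %/ b ^ i.
  by rewrite divnMA divnMDl // (divn_small hc) addn0.
congr andb.
move: (b ^ i) => p; apply/idP/idP => h; nia.
Qed.

Definition canonS (X : seq 'I_b) := (b ^ size X <= strval X * b)%N.

Lemma canonS_pos X : canonS X -> (0 < strval X)%N.
Proof.
rewrite /canonS => h; rewrite lt0n; apply: contraTneq h => ->.
by rewrite mul0n -ltnNge expn_gt0 (leq_trans _ hb).
Qed.

Lemma canonS_rcons Y c : canonS (rcons Y c) -> Y != [::] -> canonS Y.
Proof.
rewrite /canonS size_rcons strval_rcons expnS => h hY.
have hb0 : (0 < b)%N by apply: leq_trans hb.
move: h; rewrite [X in (_ <= X)%N -> _]mulnC leq_pmul2l //.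
have := ltn_ord c; case: Y hY => // a Y' _ /=; rewrite expnS.
move: (b ^ size Y') => p; move: (strval (a :: Y')) => v hc h.
rewrite [(v * b)%N]mulnC leq_pmul2l //.
rewrite leqNgt; apply/negP => hv.
have : (b * v.+1 <= b * p)%N by rewrite leq_pmul2l.
rewrite mulnS; move: h; nia.
Qed.

Lemma canonS_count (X : seq 'I_b) : canonS X -> digcount b d (strval X) = count (pred1 d) X.
Proof.
elim/last_ind: X => [|Y c IH]; first by rewrite /canonS /= expn0.
move=> hX; have hp := @canonS_pos _ hX; move: hp.
rewrite strval_rcons -cats1 count_cat /= addn0 => hp.
rewrite digcount_step // addnC; congr addn.
case: (eqVneq Y [::]) => [->|hY]; last by apply: IH; apply: (@canonS_rcons _ c)...
by rewrite /strval /digcount.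
Qed.

Lemma size_strval_eq (X Y : seq 'I_b) : size X = size Y -> strval X = strval Y -> X = Y.
Proof.
elim/last_ind: X Y => [|X c IH] Y.
  by case: Y.
case/lastP: Y => [|Y c']; first by rewrite size_rcons.
rewrite !size_rcons !strval_rcons => /eqP; rewrite eqSS => /eqP hs h.
have hc : nat_of_ord c = c'.
  by have := congr1 (modn^~ b) h; rewrite !modnMDl !modn_small.
have hb0 : (0 < b)%N by apply: leq_trans hb.
have := congr1 (divn^~ b) h; rewrite !divnMDl // !divn_small // !addn0 => hv.
by rewrite (IH _ hs hv) (ord_inj hc).
Qed.

Lemma canonS_inj (X Y : seq 'I_b) : canonS X -> canonS Y -> strval X = strval Y -> X = Y.
Proof.
move=> hX hY hv; apply: size_strval_eq => //.
have hx := strval_lt X; have hy := strval_lt Y.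
move: hX hY; rewrite /canonS => hX hY.
apply/eqP; rewrite eqn_leq; apply/andP; split; rewrite leqNgt; apply/negP => hlt.
  have : (b ^ (size Y).+1 <= b ^ size X)%N by rewrite leq_exp2l.
  rewrite expnS; move: hX hy; rewrite hv; move: (b ^ size X) (b ^ size Y) => p q; nia.
have : (b ^ (size X).+1 <= b ^ size Y)%N by rewrite leq_exp2l.
rewrite expnS; move: hY hx; rewrite -hv; move: (b ^ size X) (b ^ size Y) => p q; nia.
Qed.

Lemma canonS_surj m : (0 < m)%N -> exists X, canonS X /\ strval X = m.
Proof.
have hb0 : (0 < b)%N by apply: leq_trans hb.
elim: m {-2}m (leqnn m) => [|N IH] m hm hm0; first by case: m hm hm0.
case: (ltnP m b) => hmb.
  exists [:: Ordinal hmb]; rewrite /canonS /strval /= expn1; split => //.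
  by rewrite leq_pmull.
have hq : (0 < m %/ b)%N by rewrite divn_gt0.
have hqN : (m %/ b <= N)%N.
  rewrite -ltnS; apply: leq_trans hm; rewrite ltn_Pdiv //.
have [X [cX vX]] := IH _ hqN hq.
exists (rcons X (Ordinal (ltn_pmod m hb0))).
rewrite /canonS size_rcons strval_rcons vX /= -divn_eq; split => //.
rewrite expnS; move: cX; rewrite /canonS vX => h.
rewrite [(m * b)%N]mulnC leq_pmul2l //; apply: leq_trans h (leq_trunc_div _ _).
Qed.
End Comb.

Local Open Scope classical_set_scope.
Local Open Scope ring_scope.

Section Main.
Variables (R : realType) (b : nat) (hb : (2 <= b)%N) (d : 'I_b) (k : nat).
Let D : set R := `[(b%:R^-1 : R)%R, 1%R[.

Let bpos : (0 < b%:R :> R). Proof. by rewrite ltr0n; case: b hb. Qed.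

Let mD : measurable D. Proof. exact: measurable_itv. Qed.

Let mf : measurable_fun D (EFin \o (fun x : R => x^-1)).
Proof.
apply/measurable_EFinP.
have H := (@measurable_funS _ _ R R (`]0%R, 2%R[ : set R) D (fun x : R => x^-1)).
apply: H.
- exact: measurable_itv.
- move=> x; rewrite /D /= !in_itv /= => /andP[h1 h2].
  apply/andP; split.
    by apply: lt_le_trans h1; rewrite invr_gt0.
  by apply: (lt_trans h2); rewrite ltr1n.
apply: open_continuous_measurable_fun; first exact: interval_open.
move=> x; rewrite inE /= in_itv /= => /andP[h1 _].
by apply: inv_continuous; rewrite gt_eqF.
Qed.

Let f0 : forall x, D x -> (0 <= (x^-1)%:E)%E.
Proof.
move=> x; rewrite /D /= in_itv /= => /andP[h1 _]; rewrite lee_fin invr_ge0.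
by apply: le_trans h1; rewrite invr_ge0 ltW.
Qed.

Lemma stepA : (\int[muk R d k]_(x in D) (x^-1)%:E =
  \sum_(n <oo) ((wt R d k n)%:E * ((\d_(ptn R b n) D) * ((ptn R b n)^-1)%:E)))%E.
Proof.
rewrite /muk ge0_integral_measure_series //; apply: eq_eseriesr => n _.
by rewrite ge0_integral_mscale // integral_dirac.
Qed.

Lemma memD (X : seq 'I_b) : (strpt R X \in D) = canonS b X.
Proof.
have Bpos : (0 < (b%:R ^+ size X : R)) by rewrite exprn_gt0.
rewrite /D /strpt mem_setE in_itv /= ltr_pdivrMr // mul1r -natrX ltr_nat.
rewrite (@strval_lt b hb X) andbT ler_pdivlMr ?ltr0n ?expn_gt0 ?(leq_trans _ hb) // mulrC ler_pdivrMr //.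
by rewrite -natrM ler_nat.
Qed.

Definition hX (X : seq 'I_b) : \bar R :=
  if (count (pred1 d) X == k) && canonS b X then (((strval X)%:R : R)^-1)%:E else 0%E.

Lemma termE n : ((wt R d k n)%:E * ((\d_(ptn R b n) D) * ((ptn R b n)^-1)%:E))%E =
  match (pickle_inv n : option (seq 'I_b)) with Some X => hX X | None => 0%E end.
Proof.
rewrite /wt /ptn; case: (pickle_inv n) => [X|]; last by rewrite mul0e.
rewrite diracE memD /hX; case: (count (pred1 d) X == k) => /=; last by rewrite mul0e.
case: (canonS b X) => /=; last by rewrite mul0e mule0.
rewrite mul1e -EFinM; congr EFin; rewrite /strpt invf_div mulrA mulVf ?mul1r //.
by rewrite expf_neq0 // gt_eqF.
Qed.

Lemma esum_restrict (T : choiceType) (I : set T) (a : T -> \bar R) :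
  (forall x, ~ I x -> a x = 0%E) -> \esum_(x in setT) a x = \esum_(x in I) a x.
Proof.
move=> ha; rewrite [RHS]esum_mkcond; apply: eq_esum => x _.
case: (boolP (x \in I)) => // /negP; rewrite in_setE => hx; exact: ha.
Qed.

Let S' := [set X : seq 'I_b | (count (pred1 d) X == k) && canonS b X].

Lemma stepC : (\sum_(n <oo) ((wt R d k n)%:E * ((\d_(ptn R b n) D) * ((ptn R b n)^-1)%:E)))%E
  = \esum_(m in (@strval b) @` S') ((m%:R : R)^-1)%:E.
Proof.
rewrite (eq_eseriesr (fun n _ => termE n)).
have h0 : forall X, (0 <= hX X)%E.
  by move=> X; rewrite /hX; case: ifP => // _; rewrite lee_fin invr_ge0.
rewrite nneseries_esumT; last by move=> n; case: (pickle_inv n).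
rewrite (@esum_restrict _ (range (@pickle (seq 'I_b)))); last first.
  move=> n hn; case E: (pickle_inv n) => [X|] //; exfalso; apply: hn; exists X => //.
  by have := @pickle_invK (seq 'I_b) n; rewrite E.
rewrite esum_image; last by move=> x y _ _; exact: (pcan_inj pickleK_inv).
rewrite (eq_esum (b := hX)); last by move=> X _; rewrite pickleK_inv.
rewrite (@esum_restrict _ S'); last first.
  by move=> X hX'; rewrite /hX; case: ifP => // h; exfalso; apply: hX'.
rewrite esum_image; last first.
  by move=> X Y; rewrite /S' !inE /= => /andP[_ hx] /andP[_ hy]; apply: canonS_inj.
by apply: eq_esum => X; rewrite /S' /= /hX => ->.
Qed.

Lemma stepL : Hk R b d k = \esum_(m in (@strval b) @` S') ((m%:R : R)^-1)%:E.
Proof.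
rewrite /Hk eseries_cond nneseries_esum; last by move=> n _; rewrite lee_fin invr_ge0.
congr esum; apply/seteqP; split => m /=.
  move=> /andP[/eqP hk hm]; have [X [cX vX]] := @canonS_surj b hb m hm.
  exists X => //; rewrite /S' /= cX andbT -(@canonS_count b hb d X cX) vX hk //.
move=> [X /andP[/eqP hk cX] <-]; rewrite (@canonS_count b hb d X cX) hk eqxx /=.
exact: (@canonS_pos b hb X cX).
Qed.

Lemma mainM : Hk R b d k = (\int[muk R d k]_(x in `[(b%:R^-1 : R)%R, 1%R[) (x^-1)%:E)%E.
Proof. by rewrite stepL -stepC -stepA. Qed.
End Main.

Theorem mainTheorem5 (R : realType) (b : nat) (hb : (2 <= b)%N) (d : 'I_b) (k : nat) :
  Hk R b d k = (\int[muk R d k]_(x in `[(b%:R^-1 : R)%R, 1%R[) (x^-1)%:E)%E.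
Proof. exact: mainM. Qed.
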